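(* Let $G$ be a cograph, let $(T,t)$ be an arbitrary binary cotree of $G$, and let $\sigma$ be a greedy coloring of $G$. Then $\sigma$ is an hc-coloring with respect to $(T,t)$.
   Context: All graphs are finite, simple and undirected. A (proper vertex) coloring of $G=(V,E)$ is a surjective map $\sigma:V\to S$ with $\sigma(x)\neq\sigma(y)$ whenever $xy\in E$. A greedy coloring is a coloring $\sigma:V\to S$ for which there exist a linear order on $S$ and an ordering of $V$ such that processing the vertices in that order, each vertex receives the smallest color of $S$ not already assigned to one of its previously processed neighbors. A cograph is a graph that is $K_1$, or a disjoint union of cographs, or a join of cographs. A cotree $(T,t)$ of a cograph $G$ is a rooted tree $T$ with leaf set $V$ and a labeling $t:V^0(T)\to\{0,1\}$ of its inner vertices such that for every inner vertex $u$, $G(u):=G[L(T(u))]$ (with $L(T(u))$ the leaves descending from $u$) is the disjoint union (if $t(u)=0$) or the join (if $t(u)=1$) of the graphs $G(v)$, $v$ a child of $u$. It is binary if every inner vertex has exactly two children. A coloring $\sigma$ is an hc-coloring with respect to a binary cotree $(T,t)$ if for every inner vertex $u$ with children $v_1,v_2$: if $t(u)=1$ then $\sigma(L(T(v_1)))\cap\sigma(L(T(v_2)))=\emptyset$, and if $t(u)=0$ then one of $\sigma(L(T(v_1)))$, $\sigma(L(T(v_2)))$ contains the other. *)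

(* Defs.v *)
From mathcomp Require Import all_boot.
Set Implicit Arguments. Unset Strict Implicit. Unset Printing Implicit Defensive.

Definition simple_graph (V : finType) (adj : rel V) : Prop :=
  symmetric adj /\ irreflexive adj.

(* Binary rooted trees with leaves labelled by vertices and inner vertices
   labelled by t(u) in {0,1} (false = 0 = disjoint union, true = 1 = join). *)
Inductive bintree (V : Type) : Type :=
| Leaf of V
| Node of bool & bintree V & bintree V.
Arguments Leaf {V} _.
Arguments Node {V} _ _ _.

Fixpoint leaves (V : Type) (T : bintree V) : seq V :=
  match T with
  | Leaf x => [:: x]
  | Node _ l r => leaves l ++ leaves r
  end.

(* Local cotree condition at every inner vertex: G(u) is the disjoint union
   (label 0) resp. the join (label 1) of G(v1) and G(v2). Since G(v_i) are
   induced subgraphs of G(u), this amounts to: no edges (label 0) resp. all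
   edges (label 1) between L(T(v1)) and L(T(v2)). *)
Fixpoint cotree_ok (V : finType) (adj : rel V) (T : bintree V) : Prop :=
  match T with
  | Leaf _ => True
  | Node b l r =>
      (forall x y, x \in leaves l -> y \in leaves r -> adj x y = b)
      /\ cotree_ok adj l /\ cotree_ok adj r
  end.

Definition binary_cotree (V : finType) (adj : rel V) (T : bintree V) : Prop :=
  uniq (leaves T) /\ (forall v : V, v \in leaves T) /\ cotree_ok adj T.

Definition coloring (V S : finType) (adj : rel V) (sigma : V -> S) : Prop :=
  (forall c : S, exists x : V, sigma x = c) /\
  (forall x y : V, adj x y -> sigma x != sigma y).

Definition linear_order (S : Type) (le : rel S) : Prop :=
  reflexive le /\ antisymmetric le /\ transitive le /\ total le.

Definition greedy_coloring (V S : finType) (adj : rel V) (sigma : V -> S) : Prop :=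
  coloring adj sigma /\
  exists (le : rel S) (s : seq V),
    linear_order le /\ uniq s /\ (forall v : V, v \in s) /\
    forall (p : seq V) (v : V) (q : seq V), s = p ++ v :: q ->
      let used := [seq sigma u | u <- p & adj u v] in
      sigma v \notin used /\
      (forall c : S, c \notin used -> le (sigma v) c).

Definition colset (V S : finType) (sigma : V -> S) (T : bintree V) : {set S} :=
  [set sigma x | x in leaves T].

Fixpoint hc_ok (V S : finType) (sigma : V -> S) (T : bintree V) : Prop :=
  match T with
  | Leaf _ => True
  | Node b l r =>
      (if b then [disjoint colset sigma l & colset sigma r]
       else (colset sigma l \subset colset sigma r) ||
            (colset sigma r \subset colset sigma l))
      /\ hc_ok sigma l /\ hc_ok sigma r
  end.

Definition hc_coloring (V S : finType) (adj : rel V) (T : bintree V)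
  (sigma : V -> S) : Prop :=
  coloring adj sigma /\ hc_ok sigma T.

(* Main.v *)
Require Import Defs.
From mathcomp Require Import all_boot.

Lemma grundy (V S : finType) (adj : rel V) (sigma : V -> S) (le : rel S) (s : seq V) :
  linear_order le -> (forall v : V, v \in s) ->
  (forall (p : seq V) (v : V) (q : seq V), s = p ++ v :: q ->
      let used := [seq sigma u | u <- p & adj u v] in
      sigma v \notin used /\
      (forall c : S, c \notin used -> le (sigma v) c)) ->
  forall v c, le c (sigma v) -> c != sigma v -> exists w, adj w v /\ sigma w = c.
Proof.
move=> [_ [anti _]] alls H v c lec nec.
move: H; case/splitPr: (alls v) => p q H.
have [_ H2] := H p v q erefl.
case: (boolP (c \in [seq sigma u | u <- p & adj u v])) => cin.
  case/mapP: cin => u; rewrite mem_filter => /andP [auv _] ->.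
  by exists u.
have := H2 c cin => lvc.
by move: nec; rewrite (anti c (sigma v)) ?eqxx // lec lvc.
Qed.

Lemma maxex (V S : finType) (le : rel S) (f : V -> S) (s : seq V) :
  linear_order le -> s != [::] ->
  exists2 a, a \in s & forall x, x \in s -> le (f x) (f a).
Proof.
move=> [refl [_ [tr tot]]]; elim: s => [//|y s IH] _.
case: s IH => [|z s] IH.
  by exists y; rewrite ?mem_seq1 // => x; rewrite mem_seq1 => /eqP ->.
have [a ain amax] := IH isT.
case: (orP (tot (f y) (f a))) => h.
  exists a; first by rewrite in_cons ain orbT.
  move=> x; rewrite in_cons => /orP [/eqP -> //|]; exact: amax.
exists y; first by rewrite in_cons eqxx.
move=> x; rewrite in_cons => /orP [/eqP -> //|xin]; exact: tr (amax _ xin) h.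
Qed.

Lemma incl (V S : finType) (adj : rel V) (sigma : V -> S) (le : rel S) (A B : seq V) a b :
  linear_order le ->
  (forall v c, le c (sigma v) -> c != sigma v -> exists w, adj w v /\ sigma w = c) ->
  (forall x y : V, adj x y -> sigma x != sigma y) ->
  (forall x y, x \in A -> y \in B -> adj x y = false) ->
  (forall w x y, w \notin A -> w \notin B -> (x \in A) || (x \in B) ->
      (y \in A) || (y \in B) -> adj w x = adj w y) ->
  a \in A -> (forall x, x \in A -> le (sigma x) (sigma a)) ->
  b \in B -> le (sigma a) (sigma b) ->
  [set sigma x | x in A] \subset [set sigma x | x in B].
Proof.
move=> [_ [_ [tr _]]] gr prop cross modu ain amax bin lab.
apply/subsetP => c /imsetP [x xA ->].
have lxb : le (sigma x) (sigma b) by exact: tr (amax _ xA) lab.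
case: (eqVneq (sigma x) (sigma b)) => [->|ne].
  by apply/imsetP; exists b.
have [w [awb swx]] := gr b _ lxb ne.
case: (boolP (w \in B)) => wB; first by apply/imsetP; exists w.
case: (boolP (w \in A)) => wA; first by rewrite cross in awb.
have : adj w x by rewrite (modu w x b wA wB) ?xA ?bin ?orbT.
by move/prop; rewrite swx eqxx.
Qed.

Lemma mainlem (V S : finType) (adj : rel V) (sigma : V -> S) (le : rel S) :
  symmetric adj -> linear_order le ->
  (forall v c, le c (sigma v) -> c != sigma v -> exists w, adj w v /\ sigma w = c) ->
  (forall x y : V, adj x y -> sigma x != sigma y) ->
  forall T, cotree_ok adj T ->
  (forall w x y, w \notin leaves T -> x \in leaves T -> y \in leaves T ->
      adj w x = adj w y) -> hc_ok sigma T.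
Proof.
move=> sym lin gr prop; elim => [//|b l IHl r IHr] /= [cr [okl okr]] modu.
have nel : forall t : bintree V, leaves t != [::].
  by elim => [//|? t1 IH1 t2 _] /=; case: (leaves t1) IH1.
split; last split.
- case: b cr => cr.
    rewrite -setI_eq0; apply/eqP/setP => c; rewrite !inE.
    apply/negP => /andP [/imsetP [x xl ->] /imsetP [y yr e]].
    by move: (prop x y); rewrite cr // e eqxx => /(_ isT).
  have modu' : forall w x y, w \notin leaves l -> w \notin leaves r ->
      (x \in leaves l) || (x \in leaves r) -> (y \in leaves l) || (y \in leaves r) ->
      adj w x = adj w y.
    by move=> w x y wl wr hx hy; apply: modu; rewrite ?mem_cat ?negb_or ?wl ?wr.
  have [a ain amax] := @maxex V S le sigma (leaves l) lin (nel l).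
  have [a' ain' amax'] := @maxex V S le sigma (leaves r) lin (nel r).
  have tot := lin.2.2.2.
  case: (orP (tot (sigma a) (sigma a'))) => h.
    by rewrite /colset (@incl V S adj sigma le (leaves l) (leaves r) a a' lin gr prop cr modu' ain amax ain' h).
  rewrite /colset (@incl V S adj sigma le (leaves r) (leaves l) a' a lin gr prop) ?orbT //.
    by move=> x y xr yl; rewrite sym cr.
  by move=> w x y wr wl hx hy; apply: modu'; rewrite // orbC.
- apply: IHl => // w x y wl xl yl.
  case: (boolP (w \in leaves r)) => wr.
    by rewrite (sym w x) (sym w y) !cr.
  by apply: modu; rewrite ?mem_cat ?xl ?yl ?negb_or ?wl ?wr.
- apply: IHr => // w x y wr xr yr.
  case: (boolP (w \in leaves l)) => wl.
    by rewrite !cr.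
  by apply: modu; rewrite ?mem_cat ?xr ?yr ?negb_or ?wl ?wr ?orbT.
Qed.

Theorem lemma5 (V S : finType) (adj : rel V) (T : bintree V) (sigma : V -> S) :
  simple_graph adj ->
  binary_cotree adj T ->
  greedy_coloring adj sigma ->
  hc_coloring adj T sigma.
Proof.
move=> [sym _] [_ [allT ok]] [col [le [s [lin [_ [alls H]]]]]].
split => //.
apply: (@mainlem V S adj sigma le sym lin (@grundy V S adj sigma le s lin alls H) col.2 T ok) => w x y.
by rewrite allT.
Qed.
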